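(* Let $L>0$, let $f:\mathbb{R}^d\to\mathbb{R}$ be convex and differentiable with $L$-Lipschitz gradient, with global minimum value $f_*$. Let $x_0\in\mathbb{R}^d$, $h_0,\dots,h_{N-1}\in(0,\tfrac32]$, and $x_{i+1}=x_i-\frac{h_i}{L}\nabla f(x_i)$. Then $$\|\nabla f(x_N)\|^2\le\frac{L[f(x_0)-f(x_N)]}{\sum_{i=0}^{N-1}h_i}\quad\text{and}\quad\|\nabla f(x_N)\|^2\le\frac{L[f(x_0)-f_*]}{\tfrac12+\sum_{i=0}^{N-1}h_i}.$$ Moreover both bounds are tight: for any such $L,N,h_i$ and any $\Delta>0$ there exist a convex $f$ with $L$-Lipschitz gradient (on $\mathbb{R}$) and $x_0$ with $f(x_0)-f(x_N)=\Delta$ attaining equality in the first bound, and likewise a convex $f$ with $L$-Lipschitz gradient and $x_0$ with $f(x_0)-f_*=\Delta$ attaining equality in the second bound. *)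

(* Defs.v *)
From HB Require Import structures.
From mathcomp Require Import all_boot all_order all_algebra.
From mathcomp Require Import all_classical all_reals all_analysis.
Set Implicit Arguments. Unset Strict Implicit. Unset Printing Implicit Defensive.
Import Order.TTheory GRing.Theory Num.Theory.
Import numFieldNormedType.Exports.
Local Open Scope ring_scope.

Section Defs.
Variables (R : realType) (d : nat).

Definition dotv (u v : 'rV[R]_d) : R := \sum_(i < d) u ord0 i * v ord0 i.

Definition sqnorm (u : 'rV[R]_d) : R := dotv u u.

Definition enorm (u : 'rV[R]_d) : R := Num.sqrt (sqnorm u).

Definition is_gradient (f : 'rV[R]_d -> R) (g : 'rV[R]_d -> 'rV[R]_d) : Prop :=
  forall x, differentiable f x /\ forall v, 'd f x v = dotv (g x) v.

Definition convexf (f : 'rV[R]_d -> R) : Prop :=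
  forall (x y : 'rV[R]_d) (t : R), 0 <= t -> t <= 1 ->
    f ((1 - t) *: x + t *: y) <= (1 - t) * f x + t * f y.

Definition lipschitzL (L : R) (g : 'rV[R]_d -> 'rV[R]_d) : Prop :=
  forall x y, enorm (g x - g y) <= L * enorm (x - y).

Definition is_global_min_value (f : 'rV[R]_d -> R) (fstar : R) : Prop :=
  (exists xs, f xs = fstar) /\ forall x, fstar <= f x.

Fixpoint gd_iter (L : R) (g : 'rV[R]_d -> 'rV[R]_d) (h : nat -> R)
  (x0 : 'rV[R]_d) (n : nat) : 'rV[R]_d :=
  match n with
  | 0 => x0
  | k.+1 => let xk := gd_iter L g h x0 k in xk - (h k / L) *: g xk
  end.

End Defs.

(* Main.v *)
Require Import Defs.
From HB Require Import structures.
From mathcomp Require Import all_boot all_order all_algebra.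
From mathcomp Require Import all_classical all_reals all_analysis.
From mathcomp Require Import lra ring.
Import Order.TTheory GRing.Theory Num.Theory.
Import numFieldNormedType.Exports.
Set Implicit Arguments. Unset Strict Implicit.
Local Open Scope classical_set_scope.
Local Open Scope ring_scope.

Section Dot.
Variables (R : realType) (d : nat).
Implicit Types u v w : 'rV[R]_d.

Lemma dotvC u v : dotv u v = dotv v u.
Proof. by apply: eq_bigr => i _; rewrite mulrC. Qed.
Lemma dotvDl u v w : dotv (u + v) w = dotv u w + dotv v w.
Proof. by rewrite /dotv -big_split; apply: eq_bigr => i _; rewrite !mxE mulrDl. Qed.
Lemma dotvZl a u v : dotv (a *: u) v = a * dotv u v.
Proof. by rewrite /dotv mulr_sumr; apply: eq_bigr => i _; rewrite !mxE mulrA. Qed.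
Lemma dotvNl u v : dotv (- u) v = - dotv u v.
Proof. by rewrite -scaleN1r dotvZl mulN1r. Qed.
Lemma dotvBl u v w : dotv (u - v) w = dotv u w - dotv v w.
Proof. by rewrite dotvDl dotvNl. Qed.
Lemma dotvDr u v w : dotv w (u + v) = dotv w u + dotv w v.
Proof. by rewrite dotvC dotvDl !(dotvC w). Qed.
Lemma dotvZr a u v : dotv v (a *: u) = a * dotv v u.
Proof. by rewrite dotvC dotvZl dotvC. Qed.
Lemma dotvBr u v w : dotv w (u - v) = dotv w u - dotv w v.
Proof. by rewrite dotvC dotvBl !(dotvC w). Qed.
Lemma sqnorm_ge0 u : 0 <= sqnorm u.
Proof. by apply: sumr_ge0 => i _; rewrite -expr2 sqr_ge0. Qed.
Lemma enorm_ge0 u : 0 <= enorm u.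
Proof. exact: sqrtr_ge0. Qed.
Lemma lip_sq L (g : 'rV[R]_d -> 'rV[R]_d) : 0 <= L -> lipschitzL L g ->
  forall x y, sqnorm (g x - g y) <= L ^+ 2 * sqnorm (x - y).
Proof.
move=> L0 H x y; have := H x y; rewrite /enorm => h.
have h2 : Num.sqrt (sqnorm (g x - g y)) ^+ 2 <= (L * Num.sqrt (sqnorm (x - y))) ^+ 2.
  by rewrite ler_pXn2r // ?nnegrE ?sqrtr_ge0 // mulr_ge0 // sqrtr_ge0.
by move: h2; rewrite exprMn !sqr_sqrtr // sqnorm_ge0.
Qed.
End Dot.
Section Dot2.
Variables (R : realType) (d : nat).
Implicit Types u v w : 'rV[R]_d.
Lemma sqnormBZ u v c : sqnorm (u - c *: v) = sqnorm u - 2 * c * dotv u v + c ^+ 2 * sqnorm v.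
Proof. rewrite /sqnorm dotvBl !dotvBr !dotvZl !dotvZr (dotvC v u); ring. Qed.
Lemma sqnormZ v c : sqnorm (c *: v) = c ^+ 2 * sqnorm v.
Proof. rewrite /sqnorm dotvZl dotvZr; ring. Qed.
Lemma sqnormB u v : sqnorm (u - v) = sqnorm u - 2 * dotv u v + sqnorm v.
Proof. rewrite /sqnorm dotvBl !dotvBr (dotvC v u); ring. Qed.
End Dot2.


Section Smooth.
Context (R : realType) (d : nat) (f : 'rV[R]_d -> R) (g : 'rV[R]_d -> 'rV[R]_d).
Hypothesis fg : is_gradient f g.

Lemma dirder (x v : 'rV[R]_d) (t : R) :
  derivable (fun s : R => f (s *: v + x)) t 1 /\
  derive1 (fun s : R => f (s *: v + x)) t = dotv (g (t *: v + x)) v.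
Proof.
have E : (fun h : R => h^-1 *: (((fun s : R => f (s *: v + x)) \o shift t) (h *: 1) - f (t *: v + x)))
   = (fun h => h^-1 *: ((f \o shift (t *: v + x)) (h *: v) - f (t *: v + x))).
  apply/funext => h /=; congr (_ *: (f _ - _)).
  by rewrite /shift /= [h%:A]mulr1 scalerDl addrA.
have [df dfv] := fg (t *: v + x).
split; first by rewrite /derivable E; exact: diff_derivable.
by rewrite derive1E /derive E -/(derive f _ v) deriveE.
Qed.
End Smooth.


Section FO.
Context (R : realType) (d : nat) (f : 'rV[R]_d -> R) (g : 'rV[R]_d -> 'rV[R]_d).
Hypothesis fg : is_gradient f g.
Hypothesis fc : convexf f.

Lemma first_order x y : f x + dotv (g x) (y - x) <= f y.
Proof.
set th := fun s : R => f (s *: (y - x) + x).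
have [dth dthv] := @dirder _ _ _ _ fg x (y - x) 0.
rewrite scale0r add0r in dthv.
rewrite -dthv derive1E.
set q := fun h : R => h^-1 *: ((th \o shift 0) (h *: 1) - th 0).
have th0 : th 0 = f x by rewrite /th scale0r add0r.
have H : q @ 0^' --> derive th 0 1 by exact: dth.
have H' : q @ 0^'+ --> derive th 0 1.
  apply: cvg_trans H; apply: cvg_app => P /=.
  rewrite !near_simpl /= !near_withinE => HP; apply: filterS HP => z Hz zp.
  by apply: Hz; rewrite gt_eqF.
rewrite -lerBrDl; apply: (cvgr_to_le H').
near=> h.
have hp : 0 < h by near: h; exact: nbhs_right_gt.
have h1 : h <= 1 by near: h; apply: nbhs_right_le; exact: ltr01.
rewrite /q /= th0 /th /= addr0 [h%:A]mulr1.
have -> : h *: (y - x) + x = (1 - h) *: x + h *: y.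
  by rewrite scalerBr scalerBl scale1r addrAC [RHS]addrC addrA.
have := fc x y (ltW hp) h1.
rewrite /GRing.scale /= => hc.
rewrite -(ler_pM2l hp) mulrA divff ?gt_eqF // mul1r; lra.
Unshelve. all: by end_near.
Qed.
End FO.


Section Descent.
Context (R : realType) (d : nat) (f : 'rV[R]_d -> R) (g : 'rV[R]_d -> 'rV[R]_d) (L : R).
Hypothesis fg : is_gradient f g.
Hypothesis L0 : 0 < L.
Hypothesis lip : lipschitzL L g.

Lemma descent x y : f y <= f x + dotv (g x) (y - x) + L / 2 * sqnorm (y - x).
Proof.
set v := y - x.
set th := fun s : R => f (s *: v + x).
set a := dotv (g x) v.
set k := L / 2 * sqnorm v.
set P := ((a \*: idfun) + (k \*: (idfun * idfun)) : R -> R).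
have Hth (t : R) : is_derive t 1 th (dotv (g (t *: v + x)) v).
  have [dt dtv] := dirder fg x v t.
  by apply: DeriveDef => //; rewrite -derive1E.
have HP (t : R) : is_derive t 1 P (a *: 1 + k *: (t *: 1 + t *: 1)).
  apply: is_deriveD; apply: is_deriveZ.
set psi := th - P.
have Hpsi (t : R) : is_derive t 1 psi (dotv (g (t *: v + x)) v - (a *: 1 + k *: (t *: 1 + t *: 1))).
  exact: is_deriveB.
have dpsi (t : R) : derivable psi t 1 by have [] := Hpsi t.
have := @ler0_derive1_nincr R psi 0 1 (fun t _ => dpsi t) _ _ 0 1 (lexx _) ler01 (lexx _).
have -> : psi 1 = f y - (a + k).
  change (f (1 *: v + x) - (a * 1 + k * (1 * 1)) = f y - (a + k)).
  by rewrite scale1r /v subrK !mulr1.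
have -> : psi 0 = f x.
  change (f (0 *: v + x) - (a * 0 + k * (0 * 0)) = f x).
  by rewrite scale0r add0r !mulr0 addr0 subr0.
move=> H; rewrite -addrA -lerBlDr; apply: H.
- move=> t /[!in_itv] /= /andP [t0 t1].
  rewrite derive1E derive_val.
  have h1 := lip_sq (ltW L0) lip (t *: v + x) x.
  rewrite addrK sqnormZ in h1.
  have h2 := sqnorm_ge0 (g (t *: v + x) - g x - (L * t) *: v).
  rewrite sqnormBZ dotvBl in h2.
  rewrite /k /a /GRing.scale /= !mulr1.
  set W := dotv (g (t *: v + x)) v in h2 *.
  set Q := sqnorm (g (t *: v + x) - g x) in h1 h2.
  set S := sqnorm v in h1 h2 *.
  set A := dotv (g x) v in h2 *.
  have Lt : 0 < L * t by apply: mulr_gt0.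
  have : L * t * ((W - A) - L * t * S) <= 0 by nra.
  rewrite pmulr_rle0 //; lra.
- by apply: derivable_within_continuous => t _; exact: dpsi.
Qed.
End Descent.


Section Coco.
Context (R : realType) (d : nat) (f : 'rV[R]_d -> R) (g : 'rV[R]_d -> 'rV[R]_d) (L : R).
Hypothesis fg : is_gradient f g.
Hypothesis fc : convexf f.
Hypothesis L0 : 0 < L.
Hypothesis lip : lipschitzL L g.

Lemma coco x y : f x + dotv (g x) (y - x) + sqnorm (g y - g x) / (2 * L) <= f y.
Proof.
set u := g y - g x.
set w := y - L^-1 *: u.
have h1 := first_order fg fc x w.
have h2 := descent fg L0 lip y w.
have e1 : w - x = (y - x) - L^-1 *: u by rewrite /w addrAC.
have e2 : w - y = (- L^-1) *: u by rewrite /w addrAC subrr add0r scaleNr.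
rewrite e1 dotvBr dotvZr in h1.
rewrite e2 dotvZr sqnormZ in h2.
have eu : sqnorm u = dotv (g y) u - dotv (g x) u by rewrite /sqnorm {1}/u dotvBl.
set iL := L^-1 in h1 h2 *.
have hL : L * iL = 1 by rewrite /iL divff // gt_eqF.
have e3 : L / 2 * ((- iL) ^+ 2 * sqnorm u) = iL * sqnorm u / 2.
  rewrite sqrrN expr2; have -> : L / 2 * (iL * iL * sqnorm u) = (L * iL) * iL * sqnorm u / 2 by ring.
  by rewrite hL mul1r.
rewrite e3 in h2.
have -> : sqnorm u / (2 * L) = iL * sqnorm u / 2 by rewrite /iL invfM; ring.
rewrite eu in h2 *.
lra.
Qed.
End Coco.


Lemma alg_step (R : realType) (k m A B C D : R) : 0 < k -> 0 < m -> k <= 3 * m ->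
  0 <= A - 2 * C + B -> k * C + m * (A - 2 * C + B) <= D ->
  D <= k * A - m * (A - 2 * C + B) -> k * B <= D /\ B <= A.
Proof.
move=> k0 m0 km U0 h1 h2.
have hU : 0 <= (3 * m - k) * (A - 2 * C + B) by apply: mulr_ge0 => //; lra.
split; first by nra.
have : 0 <= k * (A - B) by nra.
by rewrite pmulr_rge0 // subr_ge0.
Qed.

Section Step.
Context (R : realType) (d : nat) (f : 'rV[R]_d -> R) (g : 'rV[R]_d -> 'rV[R]_d) (L : R).
Hypothesis fg : is_gradient f g.
Hypothesis fc : convexf f.
Hypothesis L0 : 0 < L.
Hypothesis lip : lipschitzL L g.

Lemma gd_step x (h : R) : 0 < h -> h <= 3 / 2 ->
  h * sqnorm (g (x - (h / L) *: g x)) <= L * (f x - f (x - (h / L) *: g x)) /\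
  sqnorm (g (x - (h / L) *: g x)) <= sqnorm (g x).
Proof.
move=> h0 h32.
set x' := x - (h / L) *: g x.
have c1 := coco fg fc L0 lip x' x.
have c2 := coco fg fc L0 lip x x'.
have e1 : x - x' = (h / L) *: g x by rewrite /x' opprB addrC subrK.
have e2 : x' - x = (- (h / L)) *: g x by rewrite /x' addrAC subrr add0r scaleNr.
rewrite e1 dotvZr sqnormB in c1.
rewrite e2 dotvZr sqnormB in c2.
set k := h / L in c1 c2.
set m := (2 * L)^-1.
have k0 : 0 < k by apply: divr_gt0.
have m0 : 0 < m by rewrite /m invr_gt0 mulr_gt0.
have km : k <= 3 * m.
  by rewrite /k /m invfM mulrA ler_pM2r ?invr_gt0.
set A := sqnorm (g x) in c1 c2 *.
set B := sqnorm (g x') in c1 c2 *.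
set C := dotv (g x') (g x) in c1 c2.
rewrite (dotvC (g x)) -/C in c1 c2.
have U0 : 0 <= A - 2 * C + B by have := sqnorm_ge0 (g x - g x'); rewrite sqnormB (dotvC (g x)).
have [] := alg_step (D := f x - f x') k0 m0 km U0.
- move: c1 c2; rewrite -/m; change (dotv (g x) (g x)) with A; lra.
- move: c1 c2; rewrite -/m; change (dotv (g x) (g x)) with A; lra.
move=> h1 h2; split => //.
have -> : h = k * L by rewrite /k mulfVK // gt_eqF.
by rewrite mulrAC [L * _]mulrC ler_pM2r.
Qed.
End Step.


Lemma upper_bounds (R : realType) (d : nat) (L : R) (f : 'rV[R]_d -> R) (g : 'rV[R]_d -> 'rV[R]_d)
          (fstar : R) (x0 : 'rV[R]_d) (N : nat) (h : nat -> R) :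
      0 < L -> convexf f -> is_gradient f g -> lipschitzL L g ->
      is_global_min_value f fstar ->
      (forall i, (i < N)%N -> 0 < h i /\ h i <= 3 / 2) ->
      ((0 < N)%N ->
         sqnorm (g (gd_iter L g h x0 N))
           <= L * (f x0 - f (gd_iter L g h x0 N)) / \sum_(i < N) h i)
      /\
      sqnorm (g (gd_iter L g h x0 N))
        <= L * (f x0 - fstar) / (1 / 2 + \sum_(i < N) h i).
Proof.
move=> L0 fc fg lip [_ fmin] hN.
set X := gd_iter L g h x0.
have Sge0 n : (n <= N)%N -> 0 <= \sum_(i < n) h i.
  move=> nN; apply: sumr_ge0 => i _; apply: ltW.
  by have [] := hN i (leq_trans (ltn_ord i) nN).
have key n : (n <= N)%N ->
    (\sum_(i < n) h i) * sqnorm (g (X n)) <= L * (f x0 - f (X n)).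
  elim: n => [|n IH] nN.
    by rewrite big_ord0 mul0r /X /= subrr mulr0.
  have [hp h32] := hN n nN.
  have [s1 s2] := gd_step fg fc L0 lip (X n) hp h32.
  have IH' := IH (ltnW nN).
  have S0 := Sge0 n (ltnW nN).
  rewrite big_ord_recr /=.
  have -> : X n.+1 = X n - (h n / L) *: g (X n) by [].
  set B := sqnorm (g (X n - (h n / L) *: g (X n))) in s1 s2 *.
  have hB : (\sum_(i < n) h i) * B <= (\sum_(i < n) h i) * sqnorm (g (X n)).
    by apply: ler_wpM2l.
  nra.
split.
  move=> N0.
  have SN : 0 < \sum_(i < N) h i.
    move: N0 hN; case: N {X Sge0 key} => // N _ hN.
    rewrite big_ord_recr /=; have [hp _] := hN N (ltnSn N).
    apply: (lt_le_trans hp); rewrite lerDr; apply: sumr_ge0 => i _.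
    by apply: ltW; have [] := hN i (leq_trans (ltn_ord i) (leqnSn N)).
  by rewrite ler_pdivlMr // mulrC key.
have hd := descent fg L0 lip (X N) (X N - L^-1 *: g (X N)).
have fs := fmin (X N - L^-1 *: g (X N)).
have e0 : X N - L^-1 *: g (X N) - X N = (- L^-1) *: g (X N) by rewrite addrAC subrr add0r scaleNr.
rewrite e0 dotvZr sqnormZ in hd.
have SN := Sge0 N (leqnn N).
have kN := key N (leqnn N).
set B := sqnorm (g (X N)) in hd kN *.
set S := \sum_(i < N) h i in SN kN *.
have e : L / 2 * ((- L^-1) ^+ 2 * dotv (g (X N)) (g (X N))) = L^-1 * B / 2.
  rewrite sqrrN /B /sqnorm; field; rewrite gt_eqF //.
rewrite e in hd.
have hB : B / 2 <= L * (f (X N) - fstar).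
  have H1 : L^-1 * B / 2 <= f (X N) - fstar by rewrite /B /sqnorm in hd *; lra.
  have -> : B / 2 = L * (L^-1 * B / 2) by field; rewrite gt_eqF.
  by rewrite ler_pM2l.
rewrite ler_pdivlMr; last by lra.
nra.
Qed.


Section OneD.
Context (R : realType) (F q : R -> R) (L : R).
Hypothesis L0 : 0 < L.
Hypothesis Fsub : forall x y, F x + q x * (y - x) <= F y.
Hypothesis qlip : forall x y, `|q y - q x| <= L * `|y - x|.

Lemma F_quad t s : `|F (s + t) - F t - q t * s| <= L * s ^+ 2.
Proof.
have h1 := Fsub t (s + t).
have h2 := Fsub (s + t) t.
rewrite addrK in h1.
have e : t - (s + t) = - s by rewrite opprD addrCA subrr addr0.
rewrite e in h2.
have h3 : (q (s + t) - q t) * s <= L * s ^+ 2.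
  apply: le_trans (ler_norm _) _; rewrite normrM.
  have := qlip t (s + t); rewrite addrK => H.
  apply: le_trans (ler_wpM2r (normr_ge0 s) H) _.
  by rewrite -mulrA -expr2 real_normK ?num_real.
rewrite ger0_norm; lra.
Qed.

Lemma F_derive t : derivable F t 1 /\ derive1 F t = q t.
Proof.
set Q := fun h : R => h^-1 *: ((F \o shift t) (h *: 1) - F t).
have HQ : Q @ 0^' --> q t.
  apply/cvgrPdist_le => e e0.
  near=> h.
  have hn : h != 0 by near: h; exact: nbhs_dnbhs_neq.
  have hl : `|h| <= e / L.
    near: h; rewrite near_withinE; apply: filterS (nbhs0_le (divr_gt0 e0 L0)) => y Hy _ //.
  have hq := F_quad t h.
  rewrite /Q /= [h *: 1]mulr1 /GRing.scale /=.
  have -> : q t - h^-1 * (F (h + t) - F t) = - h^-1 * (F (h + t) - F t - q t * h).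
    by field.
  rewrite normrM normrN normrV ?unitfE //.
  rewrite ler_pdivrMl ?normr_gt0 //.
  apply: le_trans hq _.
  rewrite ler_pdivlMr // in hl.
  rewrite -real_normK ?num_real //.
  have := normr_ge0 h; nra.
have dF : derivable F t 1 by apply/cvg_ex; exists (q t).
split => //.
rewrite derive1E /derive; exact: cvg_lim.
Unshelve. all: by end_near.
Qed.

Lemma enorm1 (u : 'rV[R]_1) : enorm u = `|u ord0 ord0|.
Proof. by rewrite /enorm /sqnorm /dotv big_ord1 -expr2 sqrtr_sqr. Qed.

Definition f1 := fun x : 'rV[R]_1 => F (x ord0 ord0).
Definition g1 := fun x : 'rV[R]_1 => (const_mx (q (x ord0 ord0)) : 'rV[R]_1).

Lemma lift1 : [/\ convexf f1, is_gradient f1 g1 & lipschitzL L g1].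
Proof.
split.
- move=> x y t t0 t1; rewrite /f1 !mxE.
  set a := x ord0 ord0; set b := y ord0 ord0.
  have h1 := Fsub ((1 - t) * a + t * b) a.
  have h2 := Fsub ((1 - t) * a + t * b) b.
  have t1' : 0 <= 1 - t by lra.
  have p1 := ler_wpM2l t1' h1.
  have p2 := ler_wpM2l t0 h2.
  rewrite /GRing.scale /=.
  lra.
- move=> x.
  have @pi : {linear 'rV[R]_1 -> R}.
    by exists (fun N : 'M[R]_(_, _) => N ord0 ord0); do 2![eexists]; do ?[constructor];
     rewrite ?mxE// => ? *; rewrite ?mxE//; move=> ?; rewrite !mxE.
  have epi : f1 = F \o pi by [].
  have dpi : differentiable pi x by exact/linear_differentiable/coord_continuous.
  have [dF1 dF2] := F_derive (x ord0 ord0).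
  have dF : differentiable F (pi x) by apply/derivable1_diffP.
  split; first by rewrite epi; exact: differentiable_comp.
  move=> v; rewrite epi diff_comp // diff1E // diff_lin; last exact: coord_continuous.
  rewrite /= /dotv big_ord1 /g1 mxE.
  by rewrite dF2 /GRing.scale /= mulrC.
- move=> x y; rewrite !enorm1 !mxE.
  exact: qlip.
Qed.
End OneD.


Section Clamp.
Context (R : realType) (c : R).
Hypothesis c0 : 0 < c.
Definition cl (u : R) := if u <= - c then - c else if c <= u then c else u.

Lemma cl_mono u v : u <= v -> 0 <= cl v - cl u <= v - u.
Proof.
move=> uv; have c0' := c0; rewrite /cl.
case: (lerP v (-c)) => h1; case: (lerP c v) => h2; case: (lerP u (-c)) => h3;
  case: (lerP c u) => h4; apply/andP; split; lra.
Qed.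

Lemma cl_lip u v : `|cl v - cl u| <= `|v - u|.
Proof.
case: (lerP u v) => uv.
  have /andP [a b] := cl_mono uv.
  by rewrite !ger0_norm // subr_ge0.
have /andP [a b] := cl_mono (ltW uv).
by rewrite distrC ger0_norm.
Qed.

Lemma cl_max u p : - c <= p <= c -> p * u - p ^+ 2 / 2 <= cl u * u - cl u ^+ 2 / 2.
Proof.
move=> /andP [p1 p2]; rewrite /cl.
case: (lerP u (-c)) => h1.
  have : 0 <= (p + c) * (p - c - 2 * u) by apply: mulr_ge0; lra.
  nra.
case: (lerP c u) => h2.
  have : 0 <= (c - p) * (2 * u - c - p) by apply: mulr_ge0; lra.
  nra.
have : 0 <= (u - p) ^+ 2 by exact: sqr_ge0.
nra.
Qed.
End Clamp.

Lemma cl_range (R : realType) (c u : R) : 0 < c -> - c <= cl c u <= c.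
Proof. move=> c0; rewrite /cl; case: (lerP u (-c)) => h1; case: (lerP c u) => h2; apply/andP; split; lra. Qed.
Lemma cl_hi (R : realType) (c u : R) : 0 < c -> c <= u -> cl c u = c.
Proof. move=> c0 cu; rewrite /cl; case: (lerP u (-c)) => h1; [lra|by rewrite cu]. Qed.
Lemma cl_0 (R : realType) (c : R) : 0 < c -> cl c 0 = 0.
Proof. move=> c0; rewrite /cl; case: (lerP 0 (-c)) => h1; [lra|]; case: (lerP c 0) => h2; lra. Qed.

Section Huber.
Context (R : realType) (c L : R).
Hypothesis c0 : 0 < c.
Hypothesis L0 : 0 < L.
Definition qH (t : R) := cl c (L * t).
Definition FH (t : R) := qH t * t - qH t ^+ 2 / (2 * L).

Lemma FH_sub x y : FH x + qH x * (y - x) <= FH y.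
Proof.
rewrite -(ler_pM2l L0).
have e1 : L * (FH x + qH x * (y - x)) = qH x * (L * y) - qH x ^+ 2 / 2.
  by rewrite /FH; field; rewrite gt_eqF.
have e2 : L * FH y = qH y * (L * y) - qH y ^+ 2 / 2.
  by rewrite /FH; field; rewrite gt_eqF.
rewrite e1 e2 /qH; apply: cl_max => //; exact: cl_range.
Qed.

Lemma qH_lip x y : `|qH y - qH x| <= L * `|y - x|.
Proof.
apply: le_trans (cl_lip c0 (L * x) (L * y)) _.
by rewrite -mulrBr normrM gtr0_norm.
Qed.
End Huber.


Lemma gd1 (R : realType) (q : R -> R) (L : R) (h : nat -> R) (x0 : 'rV[R]_1) n :
  (gd_iter L (g1 q) h x0 n.+1) ord0 ord0 =
  (gd_iter L (g1 q) h x0 n) ord0 ord0 - h n / L * q ((gd_iter L (g1 q) h x0 n) ord0 ord0).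
Proof. by rewrite /= !mxE. Qed.

Lemma sqnorm_g1 (R : realType) (q : R -> R) x : sqnorm (g1 q x) = q (x ord0 ord0) ^+ 2.
Proof. by rewrite /sqnorm /dotv big_ord1 /g1 mxE expr2. Qed.

Lemma psum_mono (R : realType) (h : nat -> R) N :
  (forall i, (i < N)%N -> 0 < h i /\ h i <= 3 / 2) ->
  forall n, (n <= N)%N -> 0 <= \sum_(i < n) h i <= \sum_(i < N) h i.
Proof.
move=> hN.
have k0 k : forall n, (n + k <= N)%N -> \sum_(i < n) h i <= \sum_(i < n + k) h i.
  elim: k => [|k IH] n nk; first by rewrite addn0.
  rewrite addnS in nk *; rewrite big_ord_recr /=.
  have [hp _] := hN (n + k)%N nk.
  apply: le_trans (IH n (ltnW nk)) _; rewrite lerDl; exact: ltW.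
move=> n nN; apply/andP; split.
  apply: sumr_ge0 => i _; apply: ltW.
  by have [] := hN i (leq_trans (ltn_ord i) nN).
by have := k0 (N - n)%N n; rewrite subnKC // => ->.
Qed.

Lemma tight (R : realType) :
  (forall (L : R) (N : nat) (h : nat -> R) (Delta : R),
      0 < L -> (forall i, (i < N)%N -> 0 < h i /\ h i <= 3 / 2) -> 0 < Delta ->
      ((0 < N)%N ->
         exists (f : 'rV[R]_1 -> R) (g : 'rV[R]_1 -> 'rV[R]_1) (x0 : 'rV[R]_1),
           [/\ convexf f, is_gradient f g, lipschitzL L g,
               f x0 - f (gd_iter L g h x0 N) = Delta &
               sqnorm (g (gd_iter L g h x0 N))
                 = L * (f x0 - f (gd_iter L g h x0 N)) / \sum_(i < N) h i])
      /\
      (exists (f : 'rV[R]_1 -> R) (g : 'rV[R]_1 -> 'rV[R]_1) (fstar : R)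
              (x0 : 'rV[R]_1),
         [/\ convexf f, is_gradient f g, lipschitzL L g,
             is_global_min_value f fstar /\ f x0 - fstar = Delta &
             sqnorm (g (gd_iter L g h x0 N))
               = L * (f x0 - fstar) / (1 / 2 + \sum_(i < N) h i)])).
Proof.
move=> L N h Delta L0 hN D0.
have SP := psum_mono hN.
set S := \sum_(i < N) h i.
have S0 : 0 <= S by have /andP [] := SP N (leqnn N).
split.
- move=> N0.
  have SN : 0 < S.
    rewrite /S; clear S S0 SP; move: N0 hN; case: N => // N _ hN.
    rewrite big_ord_recr /=; have [hp _] := hN N (ltnSn N).
    apply: (lt_le_trans hp); rewrite lerDr; apply: sumr_ge0 => i _.
    by apply: ltW; have [] := hN i (leq_trans (ltn_ord i) (leqnSn N)).
  set c := Num.sqrt (L * Delta / S).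
  have cc : c ^+ 2 = L * Delta / S.
    by rewrite sqr_sqrtr // ltW // divr_gt0 // mulr_gt0.
  set F := fun t : R => c * t.
  set q := fun _ : R => c.
  have Fsub x y : F x + q x * (y - x) <= F y by rewrite /F /q; lra.
  have qlip x y : `|q y - q x| <= L * `|y - x| by rewrite /q subrr normr0 mulr_ge0 // ltW.
  have [cv gr li] := lift1 L0 Fsub qlip.
  exists (f1 F), (g1 q), 0.
  have iter n : (n <= N)%N -> (gd_iter L (g1 q) h 0 n) ord0 ord0 = - (c / L) * \sum_(i < n) h i.
    elim: n => [|n IH] nN; first by rewrite big_ord0 mulr0 /= mxE.
    rewrite gd1 IH ?(ltnW nN) // big_ord_recr /= /q; ring.
  have fd : f1 F 0 - f1 F (gd_iter L (g1 q) h 0 N) = Delta.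
    rewrite /f1 iter // mxE /F -/S.
    have -> : c * 0 - c * (- (c / L) * S) = c ^+ 2 * S / L by field; rewrite gt_eqF.
    by rewrite cc; field; rewrite !gt_eqF.
  split => //; rewrite fd sqnorm_g1 /q //.
- have S12 : 0 < 1 / 2 + S by lra.
  set c := Num.sqrt (L * Delta / (1 / 2 + S)).
  have cc : c ^+ 2 = L * Delta / (1 / 2 + S).
    by rewrite sqr_sqrtr // ltW // divr_gt0 // mulr_gt0.
  have c0 : 0 < c by rewrite sqrtr_gt0 divr_gt0 // mulr_gt0.
  have [cv gr li] := lift1 L0 (FH_sub c0 L0) (qH_lip c0 L0).
  set x0 : 'rV[R]_1 := const_mx (c * (1 + S) / L).
  exists (f1 (FH c L)), (g1 (qH c L)), 0, x0.
  have iter n : (n <= N)%N -> (gd_iter L (g1 (qH c L)) h x0 n) ord0 ord0 =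
      c * (1 + S) / L - (c / L) * \sum_(i < n) h i.
    elim: n => [|n IH] nN; first by rewrite big_ord0 mulr0 subr0 /= mxE.
    rewrite gd1 IH ?(ltnW nN) // big_ord_recr /=.
    have /andP [Sn0 SnN] := SP n (ltnW nN).
    have -> : qH c L (c * (1 + S) / L - c / L * \sum_(i < n) h i) = c.
      rewrite /qH cl_hi //.
      have -> : L * (c * (1 + S) / L - c / L * \sum_(i < n) h i) = c + c * (S - \sum_(i < n) h i).
        by field; rewrite gt_eqF.
      rewrite lerDl; apply: mulr_ge0; rewrite /S; lra.
    ring.
  have XN : (gd_iter L (g1 (qH c L)) h x0 N) ord0 ord0 = c / L.
    by rewrite iter // -/S; field; rewrite gt_eqF.
  have Fx0 : f1 (FH c L) x0 = c ^+ 2 * (1 / 2 + S) / L.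
    rewrite /f1 /x0 mxE /FH /qH cl_hi //.
      by field; rewrite gt_eqF.
    have -> : L * (c * (1 + S) / L) = c + c * S by field; rewrite gt_eqF.
    rewrite lerDl; apply: mulr_ge0; lra.
  have fd : f1 (FH c L) x0 - 0 = Delta.
    rewrite subr0 Fx0 cc; field; rewrite gt_eqF //=; apply: lt0r_neq0; lra.
  split => //.
    split => //; split.
      exists (const_mx 0); rewrite /f1 mxE /FH /qH !mulr0 cl_0 //; ring.
    move=> x; have := FH_sub c0 L0 0 (x ord0 ord0).
    rewrite /f1 /FH /qH !mulr0 cl_0 //.
    by rewrite expr0n /= mul0r mul0r subrr add0r.
  rewrite fd sqnorm_g1 XN /qH cl_hi //.
    by rewrite mulrC mulfVK // gt_eqF.
Qed.


Unset Implicit Arguments. Set Strict Implicit.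
Local Close Scope classical_set_scope.
Local Open Scope ring_scope.

Theorem proposition4p4 (R : realType) :
  (* upper bounds *)
  (forall (d : nat) (L : R) (f : 'rV[R]_d -> R) (g : 'rV[R]_d -> 'rV[R]_d)
          (fstar : R) (x0 : 'rV[R]_d) (N : nat) (h : nat -> R),
      0 < L -> convexf f -> is_gradient f g -> lipschitzL L g ->
      is_global_min_value f fstar ->
      (forall i, (i < N)%N -> 0 < h i /\ h i <= 3 / 2) ->
      ((0 < N)%N ->
         sqnorm (g (gd_iter L g h x0 N))
           <= L * (f x0 - f (gd_iter L g h x0 N)) / \sum_(i < N) h i)
      /\
      sqnorm (g (gd_iter L g h x0 N))
        <= L * (f x0 - fstar) / (1 / 2 + \sum_(i < N) h i))
  /\
  (* tightness of both bounds, attained by functions on R (d = 1) *)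
  (forall (L : R) (N : nat) (h : nat -> R) (Delta : R),
      0 < L -> (forall i, (i < N)%N -> 0 < h i /\ h i <= 3 / 2) -> 0 < Delta ->
      ((0 < N)%N ->
         exists (f : 'rV[R]_1 -> R) (g : 'rV[R]_1 -> 'rV[R]_1) (x0 : 'rV[R]_1),
           [/\ convexf f, is_gradient f g, lipschitzL L g,
               f x0 - f (gd_iter L g h x0 N) = Delta &
               sqnorm (g (gd_iter L g h x0 N))
                 = L * (f x0 - f (gd_iter L g h x0 N)) / \sum_(i < N) h i])
      /\
      (exists (f : 'rV[R]_1 -> R) (g : 'rV[R]_1 -> 'rV[R]_1) (fstar : R)
              (x0 : 'rV[R]_1),
         [/\ convexf f, is_gradient f g, lipschitzL L g,
             is_global_min_value f fstar /\ f x0 - fstar = Delta &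
             sqnorm (g (gd_iter L g h x0 N))
               = L * (f x0 - fstar) / (1 / 2 + \sum_(i < N) h i)])).

Proof.
split.
- move=> d L f g fstar x0 N h L0 fc fg lip fmin hN.
  exact: upper_bounds.
- exact: (tight (R:=R)).
Qed.
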